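(* Fix an agent $i$ in an $N$-agent Markov game with finite state space $\mathcal S$ and finite action spaces, and fix the other agents' joint policy to be the demonstrator policy $\pi_E^{(-i)}$. Let $\lambda>0$ and let $\psi:\mathbb R^{\mathcal S\times\mathcal A^{(1)}\times\cdots\times\mathcal A^{(N)}}\to\overline{\mathbb R}$ be a closed proper convex function. Define $$\mathrm{RL}^{(i)}(r^{(i)})=\arg\max_{\pi^{(i)}}\ \lambda H(\pi^{(i)})+\mathbb E_{\pi^{(i)},\pi_E^{(-i)}}[r^{(i)}(s,a^{(i)},a^{(-i)})],$$ $$\mathrm{IRL}^{(i)}_\psi(\pi_E^{(i)})=\arg\max_{r^{(i)}}\ -\psi(r^{(i)})-\max_{\pi^{(i)}}\big(\lambda H(\pi^{(i)})+\mathbb E_{\pi^{(i)},\pi_E^{(-i)}}[r^{(i)}]\big)+\mathbb E_{\pi_E}[r^{(i)}],$$ and assume the optimizers involved are unique. Then the policy obtained by running $\mathrm{RL}^{(i)}$ on the reward recovered by $\mathrm{IRL}^{(i)}_\psi$ satisfies $$\mathrm{RL}^{(i)}\circ\mathrm{IRL}^{(i)}_\psi(\pi_E^{(i)})=\arg\min_{\pi^{(i)}}\ -\lambda H(\pi^{(i)})+\psi^*\big(\rho_{\pi^{(i)},\pi_E^{(-i)}}-\rho_{\pi_E}\big),$$ i.e. this IRL problem is the dual of an occupancy-measure matching problem with regularizer $\psi$, and the induced policy is its primal optimum.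
   Context: A Markov game with $N$ agents is $\langle N,\mathcal S,\mathcal A^{(1)},\dots,\mathcal A^{(N)},P,r^{(1)},\dots,r^{(N)},\rho_0,\gamma\rangle$ with transition kernel $P$, initial-state distribution $\rho_0$, discount $\gamma\in[0,1)$, and rewards $r^{(i)}:\mathcal S\times\mathcal A^{(1)}\times\cdots\times\mathcal A^{(N)}\to\mathbb R$. Agent $i$ has policy $\pi^{(i)}(a^{(i)}\mid s)$; $-i$ denotes all agents other than $i$; $\pi=(\pi^{(i)},\pi^{(-i)})$ is the joint policy, and $\pi_E=(\pi_E^{(i)},\pi_E^{(-i)})$ is the demonstrators' joint policy. For any $f$, $\mathbb E_{\pi}[f(s,a)]=\mathbb E[\sum_{t\ge0}\gamma^t f(s_t,a_t)]$ with $s_0\sim\rho_0$, $a_t\sim\pi(\cdot\mid s_t)$, $s_{t+1}\sim P(\cdot\mid s_t,a_t)$. $H(\pi^{(i)})$ is the $\gamma$-discounted causal entropy $\mathbb E_{\pi}[-\log\pi^{(i)}(a^{(i)}\mid s)]$. The occupancy measure of a joint policy $\pi$ is $\rho_\pi(s,a)=\pi(a\mid s)\sum_{t\ge0}\gamma^tP(s_t=s\mid\pi)$, and $\rho_{\pi^{(i)},\pi^{(-i)}}$ denotes $\rho_\pi$ for $\pi=(\pi^{(i)},\pi^{(-i)})$. The conjugate is taken with the sign convention adapted to rewards: $\psi^*(x)=\sup_{r}\big(-\langle x,r\rangle-\psi(r)\big)$, where $\langle x,r\rangle=\sum_{s,a}x(s,a)r(s,a)$. *)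

(* Defs.v *)
From HB Require Import structures.
From mathcomp Require Import all_boot.
From Stdlib Require Import Reals ClassicalEpsilon.
Set Implicit Arguments. Unset Strict Implicit. Unset Printing Implicit Defensive.
Open Scope R_scope.

Definition fsum (T : finType) (f : T -> R) : R := \big[Rplus/R0]_(x : T) f x.

Definition series (u : nat -> R) : R :=
  epsilon (inhabits R0) (fun l => Un_cv (fun n => sum_f_R0 u n) l).

Inductive Rbar := Fin (x : R) | PInf | NInf.

Definition Rbar_le (x y : Rbar) : Prop :=
  match x, y with
  | NInf, _ => True
  | _, PInf => True
  | Fin a, Fin b => a <= b
  | _, _ => False
  end.

Definition Rbar_opp (x : Rbar) : Rbar :=
  match x with Fin a => Fin (- a) | PInf => NInf | NInf => PInf end.

(* convention: (+oo) + (-oo) = -oo  (never used in non-degenerate cases) *)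
Definition Rbar_plus (x y : Rbar) : Rbar :=
  match x, y with
  | Fin a, Fin b => Fin (a + b)
  | NInf, _ | _, NInf => NInf
  | _, _ => PInf
  end.

Definition is_lub_Rbar (E : Rbar -> Prop) (l : Rbar) : Prop :=
  (forall x, E x -> Rbar_le x l) /\
  (forall b, (forall x, E x -> Rbar_le x b) -> Rbar_le l b).

Definition Rbar_sup (E : Rbar -> Prop) : Rbar := epsilon (inhabits NInf) (is_lub_Rbar E).

Definition inner (X : finType) (x r : X -> R) : R := fsum (fun z => x z * r z).

Definition proper_fun (X : finType) (psi : (X -> R) -> Rbar) : Prop :=
  (forall r, psi r <> NInf) /\ (exists r, psi r <> PInf).

(* convexity = convexity of the epigraph *)
Definition convex_fun (X : finType) (psi : (X -> R) -> Rbar) : Prop :=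
  forall (x y : X -> R) (a b t : R), 0 <= t <= 1 ->
    Rbar_le (psi x) (Fin a) -> Rbar_le (psi y) (Fin b) ->
    Rbar_le (psi (fun z => t * x z + (1 - t) * y z)) (Fin (t * a + (1 - t) * b)).

(* closed = all sublevel sets are closed (lower semicontinuity) *)
Definition closed_fun (X : finType) (psi : (X -> R) -> Rbar) : Prop :=
  forall (xn : nat -> X -> R) (x : X -> R) (a : R),
    (forall z, Un_cv (fun n => xn n z) (x z)) ->
    (forall n, Rbar_le (psi (xn n)) (Fin a)) ->
    Rbar_le (psi x) (Fin a).

(* convex conjugate, sign convention adapted to rewards:
   psi^*(x) = sup_r ( - <x, r> - psi(r) ) *)
Definition conj_fun (X : finType) (psi : (X -> R) -> Rbar) (x : X -> R) : Rbar :=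
  Rbar_sup (fun v => exists r : X -> R, v = Rbar_plus (Fin (- inner x r)) (Rbar_opp (psi r))).

Section Game.
Variables (N : nat) (St : finType) (A : 'I_N -> finType).

Definition jact := {dffun forall j : 'I_N, A j}.
Definition SA : finType := (St * jact)%type.

Definition is_dist (T : finType) (p : T -> R) : Prop :=
  (forall x, 0 <= p x) /\ fsum p = 1.

Definition is_policy (T : finType) (pi : St -> T -> R) : Prop :=
  forall s, is_dist (pi s).

Definition is_kernel (P : St -> jact -> St -> R) : Prop :=
  forall s a, is_dist (P s a).

(* joint policy (pi^(i), pi^(-i)) with pi^(-i) given by the other agents' policies
   piE j, j <> i (agents act independently given the state) *)
Definition jpol (i : 'I_N) (pii : St -> A i -> R) (piE : forall j, St -> A j -> R)
  (s : St) (a : jact) : R :=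
  pii s (a i) * \big[Rmult/R1]_(j | j != i) piE j s (a j).

Fixpoint state_dist (P : St -> jact -> St -> R) (rho0 : St -> R) (pi : St -> jact -> R)
  (t : nat) (s' : St) : R :=
  match t with
  | O => rho0 s'
  | S t => fsum (fun s => fsum (fun a =>
             state_dist P rho0 pi t s * pi s a * P s a s'))
  end.

Definition expect P rho0 (gamma : R) (pi : St -> jact -> R) (f : St -> jact -> R) : R :=
  series (fun t => gamma ^ t *
    fsum (fun s => fsum (fun a => state_dist P rho0 pi t s * pi s a * f s a))).

Definition occ P rho0 (gamma : R) (pi : St -> jact -> R) (sa : SA) : R :=
  pi sa.1 sa.2 * series (fun t => gamma ^ t * state_dist P rho0 pi t sa.1).

Definition causal_entropy P rho0 gamma (i : 'I_N) (pii : St -> A i -> R)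
  (pi : St -> jact -> R) : R :=
  expect P rho0 gamma pi (fun s a => - ln (pii s (a i))).

End Game.

(* Main.v *)
Require Import Defs.
From HB Require Import structures.
From mathcomp Require Import all_boot.
From mathcomp Require Import zify.
From Stdlib Require Import Reals Lra Psatz ClassicalEpsilon Classical FunctionalExtensionality.
Set Implicit Arguments. Unset Strict Implicit. Unset Printing Implicit Defensive.
Open Scope R_scope.

Lemma Rplus_assoc' : associative Rplus. Proof. move=> x y z; ring. Qed.
Lemma Rmult_assoc' : associative Rmult. Proof. move=> x y z; ring. Qed.
HB.instance Definition _ := Monoid.isComLaw.Build R R0 Rplus Rplus_assoc' Rplus_comm Rplus_0_l.
HB.instance Definition _ := Monoid.isComLaw.Build R R1 Rmult Rmult_assoc' Rmult_comm Rmult_1_l.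
HB.instance Definition _ := Monoid.isMulLaw.Build R R0 Rmult Rmult_0_l Rmult_0_r.
HB.instance Definition _ := Monoid.isAddLaw.Build R Rmult Rplus Rmult_plus_distr_r Rmult_plus_distr_l.

Lemma dffun_distr (I : finType) (T_ : I -> finType) (F : forall i, T_ i -> R) :
  \big[Rplus/R0]_(a : {dffun forall i, T_ i}) \big[Rmult/R1]_(i : I) F i (a i) =
  \big[Rmult/R1]_(i : I) \big[Rplus/R0]_(x : T_ i) F i x.
Proof.
rewrite (reindex (@dffun_of_fprod I T_)); last exact/onW_bij/dffun_of_fprod_bij.
transitivity (\big[Rplus/R0]_(t : fprod T_) \big[Rmult/R1]_(i in I) (finfun (F i)) (t i)).
  apply: eq_bigr => t _; apply: eq_bigr => i _; by rewrite !ffunE.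
rewrite big_fprod.
transitivity (\big[Rmult/R1]_(i : I) \big[Rplus/R0]_(j in tagged_with T_ i) untag R0 [ffun x => F i x] j).
  rewrite bigA_distr_big_dep; apply: eq_bigl => g; by [].
apply: eq_bigr => i _.
transitivity (\big[Rplus/R0]_(x : T_ i) [ffun x => F i x] x).
  by rewrite (big_tag (fun i => [ffun x => F i x]) i).
by apply: eq_bigr => x _; rewrite ffunE.
Qed.
Section Fsum.
Variable T : finType.
Implicit Types f g : T -> R.

Lemma fsumE f : fsum f = \big[Rplus/R0]_(x : T) f x. Proof. by []. Qed.

Lemma fsum_ext f g : (forall x, f x = g x) -> fsum f = fsum g.
Proof. by move=> H; apply: eq_bigr => x _. Qed.

Lemma fsum_plus f g : fsum (fun x => f x + g x) = fsum f + fsum g.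
Proof. by rewrite /fsum big_split. Qed.

Lemma fsum_scal c f : fsum (fun x => c * f x) = c * fsum f.
Proof. by rewrite /fsum big_distrr. Qed.

Lemma fsum_const0 : fsum (fun _ : T => 0) = 0.
Proof. by rewrite /fsum big1. Qed.

Lemma fsum_opp f : fsum (fun x => - f x) = - fsum f.
Proof.
rewrite (fsum_ext (g := fun x => -1 * f x)); last by move=> x; ring.
rewrite fsum_scal; ring.
Qed.

Lemma fsum_minus f g : fsum (fun x => f x - g x) = fsum f - fsum g.
Proof.
rewrite (fsum_ext (g := fun x => f x + - g x)) // fsum_plus fsum_opp; ring.
Qed.

Lemma fsum_le f g : (forall x, f x <= g x) -> fsum f <= fsum g.
Proof.
move=> H; rewrite /fsum; elim: (index_enum T) => [|y s IH].
  rewrite !big_nil; lra.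
rewrite !big_cons; have := H y; lra.
Qed.

Lemma fsum_nonneg f : (forall x, 0 <= f x) -> 0 <= fsum f.
Proof. move=> H; rewrite -fsum_const0; exact: fsum_le. Qed.

Lemma fsum_abs f : Rabs (fsum f) <= fsum (fun x => Rabs (f x)).
Proof.
rewrite /fsum; elim: (index_enum T) => [|y s IH].
  rewrite !big_nil Rabs_R0; lra.
rewrite !big_cons; eapply Rle_trans; first exact: Rabs_triang. lra.
Qed.

Lemma fsum_term_le f y : (forall x, 0 <= f x) -> f y <= fsum f.
Proof.
move=> H; rewrite /fsum (bigD1 y) //=.
have : 0 <= \big[Rplus/R0]_(i | i != y) f i.
  apply: big_ind; [lra | move=> a b ? ?; lra | move=> i _; exact: H].
lra.
Qed.

Lemma fsum_cv (F : nat -> T -> R) (G : T -> R) :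
  (forall x, Un_cv (fun n => F n x) (G x)) ->
  Un_cv (fun n => fsum (F n)) (fsum G).
Proof.
move=> H; rewrite /fsum.
have : forall s : seq T, Un_cv (fun n => \big[Rplus/R0]_(x <- s) F n x) (\big[Rplus/R0]_(x <- s) G x).
  elim => [|y s IH].
    rewrite big_nil; move=> e He; exists 0%nat => n _; rewrite big_nil /R_dist; 
    rewrite Rminus_0_r Rabs_R0 //.
  rewrite big_cons.
  apply: (Un_cv_ext (fun n => F n y + \big[Rplus/R0]_(x <- s) F n x)).
    by move=> n; rewrite big_cons.
  exact: CV_plus.
by apply.
Qed.

Lemma sum_f_R0_fsum (F : nat -> T -> R) n :
  sum_f_R0 (fun t => fsum (F t)) n = fsum (fun x => sum_f_R0 (fun t => F t x) n).
Proof.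
elim: n => [|n IH] /=; first by [].
by rewrite IH -fsum_plus.
Qed.

End Fsum.

Lemma fsum_swap (T U : finType) (F : T -> U -> R) :
  fsum (fun x => fsum (fun y => F x y)) = fsum (fun y => fsum (fun x => F x y)).
Proof. by rewrite /fsum exchange_big. Qed.

Lemma fsum_pair (T U : finType) (F : T * U -> R) :
  fsum F = fsum (fun x => fsum (fun y => F (x, y))).
Proof. rewrite /fsum pair_big; by apply: eq_bigr => -[x y] _. Qed.
Lemma Rbar_lub_ex (E : Rbar -> Prop) : exists l, is_lub_Rbar E l.
Proof.
destruct (classic (E PInf)) as [HP|HnP].
  exists PInf; split; first by case.
  move=> b Hb; move: (Hb _ HP); clear Hb; by case: b.
destruct (classic (exists x, E (Fin x))) as [[x0 Hx0]|Hne].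
  destruct (classic (bound (fun x => E (Fin x)))) as [Hb|Hnb].
    have [m [Hm1 Hm2]] := completeness _ Hb (ex_intro _ x0 Hx0).
    exists (Fin m); split.
      case=> //= x Hx; exact: Hm1.
    case=> //= [c Hc|Hc].
      apply: Hm2 => x Hx; exact: (Hc (Fin x) Hx).
    exact: (Hc _ Hx0).
  exists PInf; split; first by case.
  case=> // [c Hc|Hc].
    exfalso; apply: Hnb; exists c => x Hx; exact: (Hc (Fin x) Hx).
  exact: (Hc _ Hx0).
exists NInf; split.
  case=> //= x Hx; apply: Hne; by exists x.
by [].
Qed.

Lemma Rbar_sup_lub (E : Rbar -> Prop) : is_lub_Rbar E (Rbar_sup E).
Proof.
rewrite /Rbar_sup; apply: epsilon_spec; exact: Rbar_lub_ex.
Qed.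

Lemma Rbar_le_antisym_fin (x : Rbar) (c : R) : Rbar_le x (Fin c) -> Rbar_le (Fin c) x -> x = Fin c.
Proof. case: x => //= y H1 H2; f_equal; lra. Qed.

Lemma Rbar_sup_fin (E : Rbar -> Prop) (x0 M : R) :
  E (Fin x0) -> (forall v, E v -> Rbar_le v (Fin M)) ->
  exists v, Rbar_sup E = Fin v /\ (forall w, E (Fin w) -> w <= v) /\
    (forall d, 0 < d -> exists w, E (Fin w) /\ v - d < w).
Proof.
move=> H0 HM; have [Hub Hl] := Rbar_sup_lub E.
have H1 := Hub _ H0; have H2 := Hl _ HM.
move: H1 H2; case Hs: (Rbar_sup E) => [v| |] //= H1 H2.
exists v; split => //; split.
  by move=> w Hw; have := Hub _ Hw; rewrite Hs.
move=> d Hd; apply: NNPP => Hn.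
have : Rbar_le (Rbar_sup E) (Fin (v - d)).
  apply: Hl; case=> //= [w Hw|Hw].
    apply: Rnot_lt_le => Hlt; apply: Hn; by exists w.
  by have := Hub _ Hw; rewrite Hs.
rewrite Hs /=; lra.
Qed.
Lemma cv_const (c : R) : Un_cv (fun _ : nat => c) c.
Proof. move=> e He; exists 0%nat => n _; rewrite /R_dist Rminus_eq_0 Rabs_R0 //. Qed.

Lemma series_eq (u : nat -> R) (l : R) : Un_cv (fun n => sum_f_R0 u n) l -> series u = l.
Proof.
move=> H; rewrite /series.
have H' := epsilon_spec (inhabits R0) (fun l => Un_cv (fun n => sum_f_R0 u n) l) (ex_intro _ l H).
exact: (UL_sequence _ _ _ H' H).
Qed.

Lemma geom_partial (g M : R) (a : nat -> R) : 0 <= g < 1 ->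
  (forall t, 0 <= a t <= g ^ t * M) ->
  forall T k, sum_f_R0 a (T + k) - sum_f_R0 a T <= M * (g ^ (S T) - g ^ (S (T + k))) / (1 - g).
Proof.
move=> Hg Ha T; elim => [|k IH].
  rewrite addn0; have -> : M * (g ^ S T - g ^ S T) / (1 - g) = 0 by field; lra.
  lra.
rewrite addnS /=.
have -> : M * (g ^ S T - g * (g * g ^ (T + k))) / (1 - g) =
   M * (g ^ S T - g * g ^ (T + k)) / (1 - g) + g * g ^ (T + k) * M by field; lra.
have := Ha (S (T + k)); rewrite /= in IH * => h; lra.
Qed.

Lemma geom_partial0 (g M : R) (a : nat -> R) : 0 <= g < 1 ->
  (forall t, 0 <= a t <= g ^ t * M) ->
  forall n, sum_f_R0 a n <= M * (1 - g ^ (S n)) / (1 - g).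
Proof.
move=> Hg Ha; elim => [|n IH] /=.
  have -> : M * (1 - g * 1) / (1 - g) = M by field; lra.
  have := Ha 0%nat; rewrite /=; lra.
have -> : M * (1 - g * (g * g ^ n)) / (1 - g) = M * (1 - g * g ^ n) / (1 - g) + g * g ^ n * M by field; lra.
have := Ha (S n); rewrite /= in IH * => h; lra.
Qed.

Lemma geom_series (g M : R) (a : nat -> R) : 0 <= g < 1 ->
  (forall t, 0 <= a t <= g ^ t * M) ->
  Un_cv (fun n => sum_f_R0 a n) (series a) /\ 0 <= series a <= M / (1 - g) /\
  forall T, 0 <= series a - sum_f_R0 a T <= g ^ (S T) * M / (1 - g).
Proof.
move=> Hg Ha.
have HM : 0 <= M by have := Ha 0%nat; rewrite /=; lra.
have Hgn : forall n, 0 <= g ^ n by move=> n; apply: pow_le; lra.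
have [l Hl] : {l | Un_cv (fun n => sum_f_R0 a n) l}.
  apply: (Rseries_CV_comp _ (fun t => g ^ t * M)) => // .
  exists (M / (1 - g)).
  apply: (Un_cv_ext (fun n => M * sum_f_R0 (fun t => 1 * g ^ t) n)).
    move=> n; elim: n => [|n IH] /=; first ring.
    rewrite -IH; ring.
  have -> : M / (1 - g) = M * / (1 - g) by [].
  apply: CV_mult; first exact: cv_const.
  have := GP_infinite g; rewrite Rabs_right; last lra.
  by move=> H; apply H; lra.
rewrite (series_eq Hl); split => //.
have Hnn : forall t, 0 <= a t by move=> t; have := Ha t; lra.
split.
  split.
    have := sum_incr _ 0 _ Hl Hnn; have := Hnn 0%nat; rewrite /=; lra.
  eapply Rle_cv_lim; [move=> n | exact: Hl | exact: (cv_const (M / (1 - g)))].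
  apply: Rle_trans (geom_partial0 Hg Ha n) _.
  apply: Rmult_le_compat_r; first by apply: Rlt_le; apply: Rinv_0_lt_compat; lra.
  have := Hgn (S n); nra.
move=> T; split.
  have := sum_incr _ T _ Hl Hnn; lra.
have Hl' : Un_cv (fun k => sum_f_R0 a (k + T)) l by exact: CV_shift'.
have : l - sum_f_R0 a T <= M * g ^ S T / (1 - g).
  eapply (@Rle_cv_lim (fun k => sum_f_R0 a (k + T) - sum_f_R0 a T) (fun _ => M * g ^ S T / (1 - g))).
  - move=> k; rewrite addnC; apply: Rle_trans (geom_partial Hg Ha T k) _.
    apply: Rmult_le_compat_r; first by apply: Rlt_le; apply: Rinv_0_lt_compat; lra.
    have := Hgn (S (T + k)); nra.
  - exact: (CV_minus _ _ _ _ Hl' (cv_const _)).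
  - exact: cv_const.
have -> : g ^ S T * M / (1 - g) = M * g ^ S T / (1 - g) by field; lra.
done.
Qed.

Lemma partial_cv (F : nat -> nat -> R) (G : nat -> R) :
  (forall t, Un_cv (fun n => F n t) (G t)) ->
  forall T, Un_cv (fun n => sum_f_R0 (F n) T) (sum_f_R0 G T).
Proof.
move=> H; elim => [|T IH] /=; first exact: H.
exact: CV_plus.
Qed.

Lemma series_cv (g M : R) (F : nat -> nat -> R) (G : nat -> R) : 0 <= g < 1 ->
  (forall n t, 0 <= F n t <= g ^ t * M) -> (forall t, 0 <= G t <= g ^ t * M) ->
  (forall t, Un_cv (fun n => F n t) (G t)) ->
  Un_cv (fun n => series (F n)) (series G).
Proof.
move=> Hg HF HG Hc e He.
have [_ [_ HGt]] := geom_series Hg HG.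
have HFt : forall n T, 0 <= series (F n) - sum_f_R0 (F n) T <= g ^ (S T) * M / (1 - g).
  by move=> n T; have [_ [_ h]] := geom_series Hg (HF n); exact: h.
have HM : 0 <= M by have := HG 0%nat; rewrite /=; lra.
have [T HT] : exists T, g ^ (S T) * M / (1 - g) < e / 3.
  have [N HN] := pow_lt_1_zero g ltac:(rewrite Rabs_right; lra) (e / 3 * (1 - g) / (M + 1))
     ltac:(apply: Rmult_lt_0_compat; [apply: Rmult_lt_0_compat; lra | apply: Rinv_0_lt_compat; lra]).
  exists N; have := HN (S N) ltac:(lia); rewrite Rabs_right; last by apply: Rle_ge; apply: pow_le; lra.
  move=> h.
  have h2 : g ^ S N * (M + 1) < e / 3 * (1 - g).
    have -> : e / 3 * (1 - g) = e / 3 * (1 - g) / (M + 1) * (M + 1) by field; lra.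
    apply: Rmult_lt_compat_r; lra.
  have hg : 0 <= g ^ S N by apply: pow_le; lra.
  apply: (Rmult_lt_reg_r (1 - g)); first lra.
  have -> : g ^ S N * M / (1 - g) * (1 - g) = g ^ S N * M by field; lra.
  nra.
have [N HN] := @partial_cv F G Hc T (e / 3) ltac:(lra).
exists N => n Hn; have := HN n Hn; rewrite /R_dist => h.
have := HFt n T; have := HGt T.
move: h; set a := sum_f_R0 (F n) T; set b := sum_f_R0 G T; set c := g ^ S T * M / (1 - g).
move=> h1 h2 h3.
have := Rabs_def2 _ _ h1 => -[h4 h5].
have HT2 : c < e / 3 by []. clearbody a b c. apply: Rabs_def1; lra.
Qed.
Definition castF (N : nat) (A : 'I_N -> finType) (i : 'I_N) (f : A i -> R) (j : 'I_N) : A j -> R :=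
  fun x => match i =P j with ReflectT e => f (ecast k (A k) (esym e) x) | ReflectF _ => R0 end.
Arguments castF {N A} i f j x.

Lemma castF_id (N : nat) (A : 'I_N -> finType) (i : 'I_N) (f : A i -> R) x : castF i f i x = f x.
Proof.
rewrite /castF; case: (i =P i) => [e|]; last by [].
by rewrite (eq_irrelevance e erefl).
Qed.

Lemma big_nonneg (I : finType) (P : pred I) (F : I -> R) :
  (forall x, 0 <= F x) -> 0 <= \big[Rmult/R1]_(j | P j) F j.
Proof. move=> H; apply: (big_ind (fun x => 0 <= x)) => //; [lra | move=> a b ? ?; nra]. Qed.

Lemma big_le1 (I : finType) (P : pred I) (F : I -> R) :
  (forall x, 0 <= F x <= 1) -> 0 <= \big[Rmult/R1]_(j | P j) F j <= 1.
Proof. move=> H; apply: (big_ind (fun x => 0 <= x <= 1)) => //; [lra | move=> a b ? ?; nra]. Qed.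

Lemma dist_le1 (T : finType) (p : T -> R) x : is_dist p -> 0 <= p x <= 1.
Proof.
move=> [H1 H2]; split; first exact: H1.
rewrite -H2; exact: fsum_term_le.
Qed.

Lemma jpol_policy (N : nat) (St : finType) (A : 'I_N -> finType) (i : 'I_N)
  (pii : St -> A i -> R) (piE : forall j, St -> A j -> R) :
  is_policy pii -> (forall j, is_policy (piE j)) -> is_policy (jpol pii piE).
Proof.
move=> Hp HE s; split.
  move=> a; rewrite /jpol; apply: Rmult_le_pos; first by case: (Hp s).
  apply: (big_ind (fun x => 0 <= x)); [lra | move=> x y ? ?; nra | move=> j _; by case: (HE j s)].
pose G := fun j (x : A j) => if j == i then castF i (pii s) j x else piE j s x.
have Hprod : forall a : jact A, jpol pii piE s a = \big[Rmult/R1]_(j : 'I_N) G j (a j).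
  move=> a; rewrite /jpol [RHS](bigD1 i) //= /G eqxx castF_id; congr Rmult.
  by apply: eq_bigr => j /negbTE ->.
rewrite (fsum_ext Hprod) /fsum dffun_distr (bigD1 i) //=.
have H1 : \big[Rplus/R0]_(x : A i) G i x = 1.
  rewrite /G; under eq_bigr do rewrite eqxx castF_id.
  by case: (Hp s).
have H2 : \big[Rmult/R1]_(j | j != i) \big[Rplus/R0]_(x : A j) G j x = 1.
  rewrite big1 // => j /negbTE Hj; rewrite /G; under eq_bigr do rewrite Hj.
  by case: (HE j s).
rewrite H1 H2; ring.
Qed.

Lemma state_dist_prop (N : nat) (St : finType) (A : 'I_N -> finType)
  (P : St -> jact A -> St -> R) (rho0 : St -> R) (pi : St -> jact A -> R) :
  is_kernel P -> is_dist rho0 -> is_policy pi ->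
  forall t, is_dist (state_dist P rho0 pi t).
Proof.
move=> HP H0 Hpi; elim => [|t [IH1 IH2]] //=.
split.
  move=> s'; apply: fsum_nonneg => s; apply: fsum_nonneg => a.
  apply: Rmult_le_pos; [apply: Rmult_le_pos|].
  - exact: IH1.
  - by case: (Hpi s).
  - by case: (HP s a).
rewrite fsum_swap -IH2; apply: fsum_ext => s.
rewrite fsum_swap.
transitivity (fsum (fun a => state_dist P rho0 pi t s * pi s a)).
  apply: fsum_ext => a; rewrite fsum_scal; by case: (HP s a) => _ ->; ring.
rewrite fsum_scal; by case: (Hpi s) => _ ->; ring.
Qed.
Definition Sg (N : nat) (St : finType) (A : 'I_N -> finType)
  (P : St -> jact A -> St -> R) (rho0 : St -> R) (gamma : R) (pi : St -> jact A -> R) (s : St) : R :=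
  series (fun t => gamma ^ t * state_dist P rho0 pi t s).

Lemma Sg_prop (N : nat) (St : finType) (A : 'I_N -> finType)
  (P : St -> jact A -> St -> R) (rho0 : St -> R) (gamma : R) (pi : St -> jact A -> R) :
  is_kernel P -> is_dist rho0 -> 0 <= gamma < 1 -> is_policy pi ->
  forall s, Un_cv (fun n => sum_f_R0 (fun t => gamma ^ t * state_dist P rho0 pi t s) n) (Sg P rho0 gamma pi s)
   /\ 0 <= Sg P rho0 gamma pi s <= 1 / (1 - gamma).
Proof.
move=> HP H0 Hg Hpi s.
have Ha : forall t, 0 <= gamma ^ t * state_dist P rho0 pi t s <= gamma ^ t * 1.
  move=> t; have := dist_le1 s (state_dist_prop HP H0 Hpi t).
  have : 0 <= gamma ^ t by apply: pow_le; lra.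
  move=> h1 h2; split; nra.
have [h1 [h2 _]] := geom_series Hg Ha.
by split.
Qed.

Lemma sum_scal (c : R) (u : nat -> R) n : sum_f_R0 (fun t => c * u t) n = c * sum_f_R0 u n.
Proof. elim: n => [|n IH] /=; [ring | rewrite IH; ring]. Qed.

Lemma expect_occ (N : nat) (St : finType) (A : 'I_N -> finType)
  (P : St -> jact A -> St -> R) (rho0 : St -> R) (gamma : R) (pi : St -> jact A -> R)
  (f : St -> jact A -> R) :
  is_kernel P -> is_dist rho0 -> 0 <= gamma < 1 -> is_policy pi ->
  expect P rho0 gamma pi f = fsum (fun s => fsum (fun a => pi s a * f s a * Sg P rho0 gamma pi s)).
Proof.
move=> HP H0 Hg Hpi; rewrite /expect; apply: series_eq.
apply: (Un_cv_ext (fun n => fsum (fun s => fsum (fun a =>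
   pi s a * f s a * sum_f_R0 (fun t => gamma ^ t * state_dist P rho0 pi t s) n)))).
  move=> n.
  transitivity (sum_f_R0 (fun t => fsum (fun s => fsum (fun a =>
     pi s a * f s a * (gamma ^ t * state_dist P rho0 pi t s)))) n).
    rewrite sum_f_R0_fsum; apply: fsum_ext => s.
    rewrite sum_f_R0_fsum; apply: fsum_ext => a.
    by rewrite sum_scal.
  apply: sum_eq => t _.
  rewrite -fsum_scal; apply: fsum_ext => s.
  rewrite -fsum_scal; apply: fsum_ext => a; ring.
apply: fsum_cv => s; apply: fsum_cv => a.
apply: CV_mult; first exact: cv_const.
by have [h _] := Sg_prop HP H0 Hg Hpi s.
Qed.
Lemma ln_le_minus1 (y : R) : 0 < y -> ln y <= y - 1.
Proof.
move=> Hy; have := exp_ineq1_le (ln y); rewrite exp_ln //; lra.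
Qed.

Lemma hfun_bound (x : R) : 0 <= x <= 1 -> 0 <= x * - ln x <= 1.
Proof.
move=> [H0 H1]; case: (Req_dec x 0) => [->|Hx].
  rewrite Rmult_0_l; lra.
have Hp : 0 < x by lra.
have Hl : ln x <= 0.
  rewrite -ln_1; case: (Req_dec x 1) => [->|hx1]; first lra.
  apply: Rlt_le; apply: ln_increasing; lra.
split; first nra.
have := ln_le_minus1 (Rinv_0_lt_compat _ Hp); rewrite ln_Rinv // => h.
have : x * - ln x <= x * (/ x - 1) by apply: Rmult_le_compat_l; lra.
have -> : x * (/ x - 1) = 1 - x by field; lra.
lra.
Qed.

Lemma hfun_sqrt (x : R) : 0 <= x <= 1 -> x * - ln x <= 2 * sqrt x.
Proof.
move=> [H0 H1]; case: (Req_dec x 0) => [->|Hx].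
  rewrite Rmult_0_l; have := sqrt_pos 0; lra.
have Hp : 0 < x by lra.
have Hs : 0 < sqrt x by apply: sqrt_lt_R0.
have Hss := sqrt_sqrt x H0.
have Hlx : ln x = 2 * ln (sqrt x) by rewrite -{1}Hss ln_mult //; ring.
have := ln_le_minus1 (Rinv_0_lt_compat _ Hs); rewrite ln_Rinv // => h.
rewrite Hlx.
have : - ln (sqrt x) <= / sqrt x by lra.
move=> h2.
have : x * - (2 * ln (sqrt x)) <= x * (2 * / sqrt x) by apply: Rmult_le_compat_l; lra.
have -> : x * (2 * / sqrt x) = 2 * sqrt x by rewrite -{1}Hss; field; lra.
lra.
Qed.

Lemma hfun_cv (u : nat -> R) (l : R) : (forall n, 0 <= u n <= 1) -> Un_cv u l ->
  Un_cv (fun n => u n * - ln (u n)) (l * - ln l).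
Proof.
move=> Hu Hc.
have Hl : 0 <= l.
  apply: (@Rle_cv_lim (fun _ => 0) u); [move=> n; by case: (Hu n) | exact: cv_const | exact: Hc].
case: (Req_dec l 0) => [Hl0|Hl0].
2:{ have Hp : 0 < l by lra.
  apply: CV_mult => //; apply: CV_opp.
  apply: continuity_seq => //.
  apply: derivable_continuous_pt; exact: (exist _ _ (derivable_pt_lim_ln l Hp)). }
subst l; rewrite Rmult_0_l => e He.
have [N HN] := Hc (e * e / 4) ltac:(nra).
exists N => n Hn; have := HN n Hn; rewrite /R_dist Rminus_0_r => h.
have [h0 h1] := Hu n.
rewrite Rabs_right in h; last lra.
have hs : sqrt (u n) < sqrt ((e / 2) * (e / 2)) by apply: sqrt_lt_1_alt; lra.
rewrite sqrt_square in hs; last lra.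
have hb := hfun_bound (conj h0 h1).
have hq := hfun_sqrt (conj h0 h1).
rewrite Rminus_0_r Rabs_right; lra.
Qed.
Lemma incr_ge (psi : nat -> nat) : (forall n, (psi n < psi (S n))%nat) -> forall n, (n <= psi n)%nat.
Proof. move=> H; elim => [|n IH] //; have := H n; lia. Qed.

Lemma subseq_cv (v : nat -> R) l (psi : nat -> nat) :
  (forall n, (psi n < psi (S n))%nat) -> Un_cv v l -> Un_cv (fun n => v (psi n)) l.
Proof.
move=> Hp Hv e He; have [N HN] := Hv e He.
exists N => n Hn; apply: HN; have := incr_ge Hp n; lia.
Qed.

Lemma small_inv (e : R) : 0 < e -> exists N, forall n, (N <= n)%nat -> / (INR n + 1) < e.
Proof.
move=> He; have [N HN] := RinvN_cv He.
exists N => n Hn; have := HN n ltac:(lia).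
rewrite /R_dist /RinvN /= Rminus_0_r Rabs_right //.
apply: Rle_ge; apply: Rlt_le; apply: Rinv_0_lt_compat; have := pos_INR n; lra.
Qed.

Lemma ValAdh_subseq (u : nat -> R) l : ValAdh u l ->
  exists phi : nat -> nat, (forall n, (phi n < phi (S n))%nat) /\ Un_cv (fun n => u (phi n)) l.
Proof.
move=> H.
have H' : forall n N : nat, exists p : nat, (N <= p)%nat /\ Rabs (u p - l) < / (INR n + 1).
  move=> n N.
  have Hpos : 0 < / (INR n + 1) by apply: Rinv_0_lt_compat; have := pos_INR n; lra.
  have [p [Hp1 Hp2]] := H (disc l (mkposreal _ Hpos)) N
    (ex_intro _ (mkposreal _ Hpos) (fun y h => h)).
  exists p; split; first by apply/leP.
  by move: Hp2; rewrite /disc /=.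
pose c := fun n N => proj1_sig (constructive_indefinite_description _ (H' n N)).
have Hc : forall n N, (N <= c n N)%nat /\ Rabs (u (c n N) - l) < / (INR n + 1).
  move=> n N; rewrite /c; exact: proj2_sig (constructive_indefinite_description _ (H' n N)).
pose phi := fix phi n := match n with O => c O O | S m => c (S m) (S (phi m)) end.
exists phi; split.
  move=> n /=; by have [h _] := Hc (S n) (S (phi n)).
move=> e He; have [N HN] := small_inv He.
exists N => n Hn.
have Hb : Rabs (u (phi n) - l) < / (INR n + 1).
  case: n Hn => [|n] Hn /=; first by have [_ h] := Hc O O.
  by have [_ h] := Hc (S n) (S (phi n)).
rewrite /R_dist; apply: Rlt_trans Hb _; apply: HN; lia.
Qed.

Lemma bw_fin (X : finType) (f : nat -> X -> R) : (forall n x, 0 <= f n x <= 1) ->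
  exists (phi : nat -> nat) (g : X -> R), (forall n, (phi n < phi (S n))%nat) /\
    forall x, Un_cv (fun n => f (phi n) x) (g x).
Proof.
move=> Hf.
suff : forall s : seq X, exists (phi : nat -> nat) (g : X -> R), (forall n, (phi n < phi (S n))%nat) /\
    forall x, x \in s -> Un_cv (fun n => f (phi n) x) (g x).
  move=> /(_ (enum X)) [phi [g [H1 H2]]]; exists phi, g; split => // x.
  by apply: H2; rewrite mem_enum.
elim => [|y s [phi [g [H1 H2]]]].
  by exists (fun n : nat => n), (fun _ => 0); split.
have [l Hl] := @Bolzano_Weierstrass (fun n => f (phi n) y) (fun c => 0 <= c <= 1) (compact_P3 0 1) (fun n => Hf (phi n) y).
have [psi [Hp1 Hp2]] := ValAdh_subseq Hl.
exists (fun n => phi (psi n)), (fun x => if x == y then l else g x); split.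
  move=> n; have h1 := Hp1 n; have := incr_ge H1 (psi n).
  have : forall a b, (a < b)%nat -> (phi a < phi b)%nat.
    move=> a b; elim: b => [|b IH] //; rewrite ltnS leq_eqVlt => /orP [/eqP ->|h].
      exact: H1.
    have := H1 b; have := IH h; lia.
  move=> Hm _; exact: Hm.
move=> x; rewrite in_cons => /orP [/eqP ->|hx].
  by rewrite eqxx.
case: eqP => [->|_]; first by [].
exact: subseq_cv Hp1 (H2 x hx).
Qed.
Lemma inner_lin (X : finType) (x r1 r2 : X -> R) (a b : R) :
  inner x (fun z => a * r1 z + b * r2 z) = a * inner x r1 + b * inner x r2.
Proof.
rewrite /inner -!fsum_scal -fsum_plus; apply: fsum_ext => z; ring.
Qed.

Lemma inner_minus (X : finType) (x1 x2 r : X -> R) :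
  inner (fun z => x1 z - x2 z) r = inner x1 r - inner x2 r.
Proof. rewrite /inner -fsum_minus; apply: fsum_ext => z; ring. Qed.

Lemma inner_bound (X : finType) (x r : X -> R) (B : R) :
  (forall z, 0 <= x z <= B) -> Rabs (inner x r) <= B * fsum (fun z => Rabs (r z)).
Proof.
move=> H; rewrite /inner; apply: Rle_trans (fsum_abs _) _.
rewrite -fsum_scal; apply: fsum_le => z; rewrite Rabs_mult.
have := H z => -[h1 h2]; rewrite (Rabs_right (x z)); last lra.
apply: Rmult_le_compat_r; [exact: Rabs_pos | lra].
Qed.

Lemma Eexp_inner (N : nat) (St : finType) (A : 'I_N -> finType)
  (P : St -> jact A -> St -> R) (rho0 : St -> R) (gamma : R) (pi : St -> jact A -> R)
  (r : SA St A -> R) :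
  is_kernel P -> is_dist rho0 -> 0 <= gamma < 1 -> is_policy pi ->
  expect P rho0 gamma pi (fun s a => r (s, a)) = inner (occ P rho0 gamma pi) r.
Proof.
move=> HP H0 Hg Hpi; rewrite (expect_occ _ HP H0 Hg Hpi) /inner fsum_pair.
apply: fsum_ext => s; apply: fsum_ext => a; rewrite /occ /= /Sg !Rmult_assoc; congr (_ * _); apply: Rmult_comm.
Qed.

Lemma occ_bound (N : nat) (St : finType) (A : 'I_N -> finType)
  (P : St -> jact A -> St -> R) (rho0 : St -> R) (gamma : R) (pi : St -> jact A -> R) :
  is_kernel P -> is_dist rho0 -> 0 <= gamma < 1 -> is_policy pi ->
  forall z, 0 <= occ P rho0 gamma pi z <= 1 / (1 - gamma).
Proof.
move=> HP H0 Hg Hpi [s a]; rewrite /occ /=.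
have [_ [h1 h2]] := Sg_prop HP H0 Hg Hpi s; rewrite /Sg in h1 h2.
have := dist_le1 a (Hpi s); move=> [h3 h4]; split; nra.
Qed.

Definition Oth (N : nat) (St : finType) (A : 'I_N -> finType) (i : 'I_N)
  (piE : forall j, St -> A j -> R) (s : St) (a : jact A) : R :=
  \big[Rmult/R1]_(j | j != i) piE j s (a j).

Lemma Oth_bound (N : nat) (St : finType) (A : 'I_N -> finType) (i : 'I_N)
  (piE : forall j, St -> A j -> R) s a :
  (forall j, is_policy (piE j)) -> 0 <= Oth i piE s a <= 1.
Proof.
move=> HE; rewrite /Oth; apply: (big_ind (fun x => 0 <= x <= 1)); [lra | move=> x y ? ?; nra |].
move=> j _; exact: dist_le1 (HE j s).
Qed.

Lemma Hent_formula (N : nat) (St : finType) (A : 'I_N -> finType)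
  (P : St -> jact A -> St -> R) (rho0 : St -> R) (gamma : R)
  (piE : forall j, St -> A j -> R) (i : 'I_N) (pii : St -> A i -> R) :
  is_kernel P -> is_dist rho0 -> 0 <= gamma < 1 -> (forall j, is_policy (piE j)) -> is_policy pii ->
  causal_entropy P rho0 gamma pii (jpol pii piE) =
  fsum (fun s => fsum (fun a : jact A => (pii s (a i) * - ln (pii s (a i))) * Oth i piE s a *
     Sg P rho0 gamma (jpol pii piE) s)).
Proof.
move=> HP H0 Hg HE Hp.
rewrite /causal_entropy (expect_occ _ HP H0 Hg (jpol_policy Hp HE)).
apply: fsum_ext => s; apply: fsum_ext => a; rewrite /jpol /Oth; ring.
Qed.

Lemma Hent_bound (N : nat) (St : finType) (A : 'I_N -> finType)
  (P : St -> jact A -> St -> R) (rho0 : St -> R) (gamma : R)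
  (piE : forall j, St -> A j -> R) (i : 'I_N) (pii : St -> A i -> R) :
  is_kernel P -> is_dist rho0 -> 0 <= gamma < 1 -> (forall j, is_policy (piE j)) -> is_policy pii ->
  causal_entropy P rho0 gamma pii (jpol pii piE) <=
  fsum (fun s : St => fsum (fun a : jact A => 1 / (1 - gamma))).
Proof.
move=> HP H0 Hg HE Hp; rewrite (Hent_formula HP H0 Hg HE Hp).
apply: fsum_le => s; apply: fsum_le => a.
have := hfun_bound (dist_le1 (a i) (Hp s)).
have := Oth_bound i s a HE.
have [_ h] := Sg_prop HP H0 Hg (jpol_policy Hp HE) s.
move=> h1 h2.
have : 0 <= pii s (a i) * - ln (pii s (a i)) * Oth i piE s a <= 1 by split; nra.
move=> h3.
have : pii s (a i) * - ln (pii s (a i)) * Oth i piE s a * Sg P rho0 gamma (jpol pii piE) s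
   <= 1 * Sg P rho0 gamma (jpol pii piE) s by apply: Rmult_le_compat_r; lra.
move=> h4; apply: Rle_trans h4 _; rewrite Rmult_1_l; exact: (proj2 h).
Qed.

Lemma jpol_cv (N : nat) (St : finType) (A : 'I_N -> finType) (i : 'I_N)
  (piE : forall j, St -> A j -> R) (u : nat -> St -> A i -> R) (ub : St -> A i -> R) :
  (forall s x, Un_cv (fun n => u n s x) (ub s x)) ->
  forall s a, Un_cv (fun n => jpol (u n) piE s a) (jpol ub piE s a).
Proof. move=> Hc s a; rewrite /jpol; apply: CV_mult; [exact: Hc | exact: cv_const]. Qed.

Lemma dist_cv (N : nat) (St : finType) (A : 'I_N -> finType)
  (P : St -> jact A -> St -> R) (rho0 : St -> R) (pin : nat -> St -> jact A -> R) (pib : St -> jact A -> R) :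
  (forall s a, Un_cv (fun n => pin n s a) (pib s a)) ->
  forall t s, Un_cv (fun n => state_dist P rho0 (pin n) t s) (state_dist P rho0 pib t s).
Proof.
move=> Hc; elim => [|t IH] s /=; first exact: cv_const.
apply: fsum_cv => s0; apply: fsum_cv => a.
apply: CV_mult; last exact: cv_const.
by apply: CV_mult.
Qed.

Lemma Sg_cv (N : nat) (St : finType) (A : 'I_N -> finType)
  (P : St -> jact A -> St -> R) (rho0 : St -> R) (gamma : R)
  (pin : nat -> St -> jact A -> R) (pib : St -> jact A -> R) :
  is_kernel P -> is_dist rho0 -> 0 <= gamma < 1 ->
  (forall n, is_policy (pin n)) -> is_policy pib ->
  (forall s a, Un_cv (fun n => pin n s a) (pib s a)) ->
  forall s, Un_cv (fun n => Sg P rho0 gamma (pin n) s) (Sg P rho0 gamma pib s).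
Proof.
move=> HP H0 Hg Hn Hb Hc s; rewrite /Sg.
have Hgt : forall t, 0 <= gamma ^ t by move=> t; apply: pow_le; lra.
apply: (series_cv (M := 1) Hg).
- move=> n t; have := dist_le1 s (state_dist_prop HP H0 (Hn n) t); have := Hgt t; split; nra.
- move=> t; have := dist_le1 s (state_dist_prop HP H0 Hb t); have := Hgt t; split; nra.
- move=> t; apply: CV_mult; first exact: cv_const.
  exact: dist_cv.
Qed.

Lemma Eexp_cv (N : nat) (St : finType) (A : 'I_N -> finType)
  (P : St -> jact A -> St -> R) (rho0 : St -> R) (gamma : R)
  (piE : forall j, St -> A j -> R) (i : 'I_N) (u : nat -> St -> A i -> R) (ub : St -> A i -> R)
  (f : St -> jact A -> R) :
  is_kernel P -> is_dist rho0 -> 0 <= gamma < 1 -> (forall j, is_policy (piE j)) ->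
  (forall n, is_policy (u n)) -> is_policy ub ->
  (forall s x, Un_cv (fun n => u n s x) (ub s x)) ->
  Un_cv (fun n => expect P rho0 gamma (jpol (u n) piE) f) (expect P rho0 gamma (jpol ub piE) f).
Proof.
move=> HP H0 Hg HE Hn Hb Hc.
rewrite (expect_occ _ HP H0 Hg (jpol_policy Hb HE)).
apply: (Un_cv_ext (fun n => fsum (fun s => fsum (fun a =>
   jpol (u n) piE s a * f s a * Sg P rho0 gamma (jpol (u n) piE) s)))).
  by move=> n; rewrite (expect_occ _ HP H0 Hg (jpol_policy (Hn n) HE)).
apply: fsum_cv => s; apply: fsum_cv => a.
apply: CV_mult; first by apply: CV_mult; [exact: jpol_cv | exact: cv_const].
apply: (Sg_cv HP H0 Hg).
- move=> n; exact: jpol_policy (Hn n) HE.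
- exact: jpol_policy Hb HE.
- exact: jpol_cv.
Qed.

Lemma Hent_cv (N : nat) (St : finType) (A : 'I_N -> finType)
  (P : St -> jact A -> St -> R) (rho0 : St -> R) (gamma : R)
  (piE : forall j, St -> A j -> R) (i : 'I_N) (u : nat -> St -> A i -> R) (ub : St -> A i -> R) :
  is_kernel P -> is_dist rho0 -> 0 <= gamma < 1 -> (forall j, is_policy (piE j)) ->
  (forall n, is_policy (u n)) -> is_policy ub ->
  (forall s x, Un_cv (fun n => u n s x) (ub s x)) ->
  Un_cv (fun n => causal_entropy P rho0 gamma (u n) (jpol (u n) piE))
        (causal_entropy P rho0 gamma ub (jpol ub piE)).
Proof.
move=> HP H0 Hg HE Hn Hb Hc.
rewrite (Hent_formula HP H0 Hg HE Hb).
apply: (Un_cv_ext (fun n => fsum (fun s => fsum (fun a : jact A =>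
   (u n s (a i) * - ln (u n s (a i))) * Oth i piE s a * Sg P rho0 gamma (jpol (u n) piE) s)))).
  by move=> n; rewrite (Hent_formula HP H0 Hg HE (Hn n)).
apply: fsum_cv => s; apply: fsum_cv => a.
apply: CV_mult.
  apply: CV_mult; last exact: cv_const.
  apply: hfun_cv; last exact: Hc.
  move=> n; exact: dist_le1 (Hn n s).
apply: (Sg_cv HP H0 Hg).
- move=> n; exact: jpol_policy (Hn n) HE.
- exact: jpol_policy Hb HE.
- exact: jpol_cv.
Qed.
Lemma bw_policy (St T : finType) (u : nat -> St -> T -> R) : (forall n, is_policy (u n)) ->
  exists (phi : nat -> nat) (ub : St -> T -> R), (forall n, (phi n < phi (S n))%nat) /\ is_policy ub /\
    forall s x, Un_cv (fun n => u (phi n) s x) (ub s x).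
Proof.
move=> Hu.
have [phi [g [H1 H2]]] := @bw_fin (St * T)%type (fun n (z : St * T) => u n z.1 z.2)
  (fun n z => dist_le1 z.2 (Hu n z.1)).
exists phi, (fun s x => g (s, x)); split => //.
have Hc : forall s x, Un_cv (fun n => u (phi n) s x) (g (s, x)) by move=> s x; exact: (H2 (s, x)).
split => // s; split.
  move=> x; apply: (@Rle_cv_lim (fun _ => 0) (fun n => u (phi n) s x)).
  - move=> n; by case: (Hu (phi n) s).
  - exact: cv_const.
  - exact: Hc.
apply: (UL_sequence (fun n => fsum (u (phi n) s))).
  exact: fsum_cv.
apply: (Un_cv_ext (fun _ => 1)); last exact: cv_const.
move=> n; by case: (Hu (phi n) s).
Qed.

Definition Rl (N : nat) (St : finType) (A : 'I_N -> finType)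
  (P : St -> jact A -> St -> R) (rho0 : St -> R) (gamma : R)
  (piE : forall j, St -> A j -> R) (i : 'I_N) (lam : R) (r : SA St A -> R) (pii : St -> A i -> R) : R :=
  lam * causal_entropy P rho0 gamma pii (jpol pii piE) +
  expect P rho0 gamma (jpol pii piE) (fun s a => r (s, a)).

Lemma Eexp_bound (N : nat) (St : finType) (A : 'I_N -> finType)
  (P : St -> jact A -> St -> R) (rho0 : St -> R) (gamma : R)
  (piE : forall j, St -> A j -> R) (i : 'I_N) (pii : St -> A i -> R) (r : SA St A -> R) :
  is_kernel P -> is_dist rho0 -> 0 <= gamma < 1 -> (forall j, is_policy (piE j)) -> is_policy pii ->
  Rabs (expect P rho0 gamma (jpol pii piE) (fun s a => r (s, a))) <=
  1 / (1 - gamma) * fsum (fun z => Rabs (r z)).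
Proof.
move=> HP H0 Hg HE Hp.
have Hj := jpol_policy Hp HE.
rewrite (Eexp_inner _ HP H0 Hg Hj).
apply: inner_bound; exact: occ_bound HP H0 Hg Hj.
Qed.

Lemma danskin (N : nat) (St : finType) (A : 'I_N -> finType)
  (P : St -> jact A -> St -> R) (rho0 : St -> R) (gamma : R)
  (piE : forall j, St -> A j -> R) (i : 'I_N) (lam : R) (r r0 : SA St A -> R)
  (pst : St -> A i -> R) (Q : R) :
  is_kernel P -> is_dist rho0 -> 0 <= gamma < 1 -> (forall j, is_policy (piE j)) ->
  is_policy pst ->
  (forall pii : St -> A i -> R, is_policy pii -> Rl P rho0 gamma piE lam r0 pii <= Rl P rho0 gamma piE lam r0 pst) ->
  (forall pii : St -> A i -> R, is_policy pii ->
     (forall pii' : St -> A i -> R, is_policy pii' -> Rl P rho0 gamma piE lam r0 pii' <= Rl P rho0 gamma piE lam r0 pii) ->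
     forall s a, pii s a = pst s a) ->
  (forall t d, 0 < t <= 1 -> 0 < d -> exists pii : St -> A i -> R, is_policy pii /\
     t * (Q + (expect P rho0 gamma (jpol pst piE) (fun s a => r (s, a)) -
               expect P rho0 gamma (jpol pst piE) (fun s a => r0 (s, a)))
            - (expect P rho0 gamma (jpol pii piE) (fun s a => r (s, a)) -
               expect P rho0 gamma (jpol pii piE) (fun s a => r0 (s, a))))
     + (Rl P rho0 gamma piE lam r0 pst - Rl P rho0 gamma piE lam r0 pii) < d) ->
  Q <= 0.
Proof.
move=> HP H0 Hg HE Hpst Hmax Huniq Happ.
pose E (pii : St -> A i -> R) (f : SA St A -> R) := expect P rho0 gamma (jpol pii piE) (fun s a => f (s, a)).
pose D pii := E pii r - E pii r0.
pose Rr (pii : St -> A i -> R) := Rl P rho0 gamma piE lam r0 pii.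
pose B := 1 / (1 - gamma) * fsum (fun z => Rabs (r z)) + 1 / (1 - gamma) * fsum (fun z => Rabs (r0 z)).
have HD : forall pii, is_policy pii -> Rabs (D pii) <= B.
  move=> pii Hp; rewrite /D /B /E.
  have h1 := Eexp_bound r HP H0 Hg HE Hp; have h2 := Eexp_bound r0 HP H0 Hg HE Hp.
  apply: Rle_trans (Rabs_triang _ _) _; rewrite Rabs_Ropp; lra.
pose K := Rabs Q + Rabs (D pst) + B.
pose t := fun n : nat => / (INR n + 2).
have Ht : forall n, 0 < t n <= 1.
  move=> n; rewrite /t; have := pos_INR n => h; split.
    apply: Rinv_0_lt_compat; lra.
  rewrite -Rinv_1; apply: Rinv_le_contravar; lra.
have Ht0 : Un_cv t 0.
  move=> e He; have [N0 HN] := small_inv He; exists N0 => n Hn.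
  rewrite /R_dist Rminus_0_r Rabs_right; last by have := Ht n; lra.
  apply: Rle_lt_trans (HN n ltac:(lia)); rewrite /t.
  apply: Rinv_le_contravar; [have := pos_INR n; lra | lra].
have Hex : forall n, exists pii, is_policy pii /\
   t n * (Q + D pst - D pii) + (Rr pst - Rr pii) < t n * t n.
  move=> n; have [h1 h2] := Ht n; exact: Happ (t n) (t n * t n) (conj h1 h2) ltac:(nra).
pose u := fun n => proj1_sig (constructive_indefinite_description _ (Hex n)).
have Hu : forall n, is_policy (u n) /\ t n * (Q + D pst - D (u n)) + (Rr pst - Rr (u n)) < t n * t n.
  move=> n; exact: proj2_sig (constructive_indefinite_description _ (Hex n)).
have Hi : forall n, Q + D pst - D (u n) <= t n.
  move=> n; have [Hp h] := Hu n; have := Hmax _ Hp; rewrite -/(Rr _) -/(Rr pst) => hm.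
  have [ht1 ht2] := Ht n.
  apply: (Rmult_le_reg_l (t n)) => //; lra.
have Hii : forall n, Rr pst - Rr (u n) <= t n * t n + t n * K.
  move=> n; have [Hp h] := Hu n; have [ht1 ht2] := Ht n.
  have hK : - K <= Q + D pst - D (u n).
    have := HD _ Hp; rewrite /K => h3.
    have := Rabs_pos (D pst); have := Rle_abs (- Q); rewrite Rabs_Ropp.
    have := Rle_abs (- D pst); rewrite Rabs_Ropp.
    have := Rle_abs (D (u n)); lra.
  have : t n * (- K) <= t n * (Q + D pst - D (u n)) by apply: Rmult_le_compat_l; lra.
  lra.
have [phi [ub [Hphi [Hub Hcv]]]] := bw_policy (fun n => proj1 (Hu n)).
have Hup : forall n, is_policy (u (phi n)) by move=> n; exact: proj1 (Hu (phi n)).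
have Htp : Un_cv (fun n => t (phi n)) 0 := subseq_cv Hphi Ht0.
have HEc : forall f : SA St A -> R, Un_cv (fun n => E (u (phi n)) f) (E ub f).
  move=> f; rewrite /E; exact: (Eexp_cv _ HP H0 Hg HE Hup Hub Hcv).
have HRc : Un_cv (fun n => Rr (u (phi n))) (Rr ub).
  rewrite /Rr /Rl; apply: CV_plus; last exact: HEc.
  apply: CV_mult; first exact: cv_const.
  exact: (Hent_cv HP H0 Hg HE Hup Hub Hcv).
have Hmaxub : Rr pst - Rr ub <= 0.
  have := @Rle_cv_lim (fun n => Rr pst - Rr (u (phi n))) (fun n => t (phi n) * t (phi n) + t (phi n) * K)
    (Rr pst - Rr ub) (0 * 0 + 0 * K) (fun n => Hii (phi n))
    (CV_minus _ _ _ _ (cv_const _) HRc)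
    (CV_plus _ _ _ _ (CV_mult _ _ _ _ Htp Htp) (CV_mult _ _ _ _ Htp (cv_const K))).
  lra.
have Heq : ub = pst.
  apply: functional_extensionality => s; apply: functional_extensionality => a.
  apply: Huniq => // pii' Hp'.
  have := Hmax _ Hp'; move: Hmaxub; rewrite /Rr; lra.
have := @Rle_cv_lim (fun n => Q + D pst - D (u (phi n))) (fun n => t (phi n))
    (Q + D pst - D ub) 0 (fun n => Hi (phi n))
    (CV_minus _ _ _ _ (CV_plus _ _ _ _ (cv_const _) (cv_const _)) (CV_minus _ _ _ _ (HEc r) (HEc r0)))
    Htp.
rewrite Heq; lra.
Qed.
Theorem proposition1
  (N : nat) (St : finType) (A : 'I_N -> finType)
  (P : St -> jact A -> St -> R) (rho0 : St -> R) (gamma : R)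
  (piE : forall j : 'I_N, St -> A j -> R)
  (i : 'I_N) (lam : R) (psi : (SA St A -> R) -> Rbar) :
  is_kernel P -> is_dist rho0 -> 0 <= gamma < 1 ->
  (forall j, is_policy (piE j)) ->
  0 < lam ->
  proper_fun psi -> convex_fun psi -> closed_fun psi ->
  let Hent (pii : St -> A i -> R) :=
    causal_entropy P rho0 gamma pii (jpol pii piE) in
  let Eexp (pii : St -> A i -> R) (r : SA St A -> R) :=
    expect P rho0 gamma (jpol pii piE) (fun s a => r (s, a)) in
  (* objective of RL^(i)(r) *)
  let rl_obj (r : SA St A -> R) (pii : St -> A i -> R) := lam * Hent pii + Eexp pii r in
  (* max_{pi^(i)} ( lam H(pi^(i)) + E_{pi^(i),piE^(-i)}[r] ) *)
  let rl_val (r : SA St A -> R) :=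
    Rbar_sup (fun v => exists pii, is_policy pii /\ v = Fin (rl_obj r pii)) in
  (* objective of IRL^(i)_psi(piE^(i)) *)
  let irl_obj (r : SA St A -> R) :=
    Rbar_plus (Rbar_plus (Rbar_opp (psi r)) (Rbar_opp (rl_val r)))
              (Fin (Eexp (piE i) r)) in
  (* objective of the occupancy-measure matching problem *)
  let primal_obj (pii : St -> A i -> R) :=
    Rbar_plus (Fin (- lam * Hent pii))
      (conj_fun psi (fun sa => occ P rho0 gamma (jpol pii piE) sa
                               - occ P rho0 gamma (jpol (piE i) piE) sa)) in
  forall (r_irl : SA St A -> R) (pi_rl pi_primal : St -> A i -> R),
    (* r_irl = IRL^(i)_psi(piE^(i)), the unique maximizer *)
    (forall r, Rbar_le (irl_obj r) (irl_obj r_irl)) ->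
    (forall r, (forall r', Rbar_le (irl_obj r') (irl_obj r)) -> r = r_irl) ->
    (* pi_rl = RL^(i)(r_irl), the unique maximizer *)
    is_policy pi_rl ->
    (forall pii, is_policy pii -> rl_obj r_irl pii <= rl_obj r_irl pi_rl) ->
    (forall pii, is_policy pii ->
       (forall pii', is_policy pii' -> rl_obj r_irl pii' <= rl_obj r_irl pii) ->
       forall s a, pii s a = pi_rl s a) ->
    (* pi_primal = the unique minimizer of -lam H + psi^*(rho - rhoE) *)
    is_policy pi_primal ->
    (forall pii, is_policy pii -> Rbar_le (primal_obj pi_primal) (primal_obj pii)) ->
    (forall pii, is_policy pii ->
       (forall pii', is_policy pii' -> Rbar_le (primal_obj pii) (primal_obj pii')) ->
       forall s a, pii s a = pi_primal s a) ->
    forall s a, pi_rl s a = pi_primal s a.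
Proof.
move=> HP H0 Hg HE Hlam Hprop Hconv Hclosed Hent Eexp rl_obj rl_val irl_obj primal_obj
  r_irl pi_rl pi_primal Hirl Hirl_u Hrl_pol Hrl_max Hrl_u Hpr_pol Hpr_min Hpr_u.
have HEi : is_policy (piE i) := HE i.
have FE : forall (pii : St -> A i -> R) r, is_policy pii ->
    Eexp pii r = inner (occ P rho0 gamma (jpol pii piE)) r.
  move=> pii r Hp; exact: (Eexp_inner r HP H0 Hg (jpol_policy Hp HE)).
have Hbnd : forall r, exists M, forall pii, is_policy pii -> rl_obj r pii <= M.
  move=> r; exists (lam * fsum (fun s : St => fsum (fun a : jact A => 1 / (1 - gamma))) +
                   1 / (1 - gamma) * fsum (fun z => Rabs (r z))).
  move=> pii Hp.
  have h1 : Hent pii <= fsum (fun s : St => fsum (fun a : jact A => 1 / (1 - gamma))) :=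
    Hent_bound HP H0 Hg HE Hp.
  have h2 : Rabs (Eexp pii r) <= 1 / (1 - gamma) * fsum (fun z => Rabs (r z)) :=
    Eexp_bound r HP H0 Hg HE Hp.
  have h3 := Rle_abs (Eexp pii r).
  have : lam * Hent pii <= lam * fsum (fun s : St => fsum (fun a : jact A => 1 / (1 - gamma))).
    apply: Rmult_le_compat_l; [lra | exact: h1].
  rewrite /rl_obj; lra.
have Hval : forall r, exists v, rl_val r = Fin v /\
    (forall pii, is_policy pii -> rl_obj r pii <= v) /\
    (forall d, 0 < d -> exists pii, is_policy pii /\ v - d < rl_obj r pii).
  move=> r; have [M HM] := Hbnd r.
  have Hb : forall v, (exists pii, is_policy pii /\ v = Fin (rl_obj r pii)) -> Rbar_le v (Fin M).
    by move=> w [pii [Hp ->]] /=; exact: HM.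
  have [v [Hv1 [Hv2 Hv3]]] := @Rbar_sup_fin (fun v => exists pii, is_policy pii /\ v = Fin (rl_obj r pii))
    (rl_obj r pi_rl) M (ex_intro _ pi_rl (conj Hrl_pol erefl)) Hb.
  exists v; split => //; split.
    move=> pii Hp; apply: Hv2; by exists pii.
  move=> d Hd; have [w [[pii [Hp Hw]] Hlt]] := Hv3 d Hd; exists pii; split => //.
  by case: Hw => <-.
have Hvstar : rl_val r_irl = Fin (rl_obj r_irl pi_rl).
  have [v [Hv1 [Hv2 Hv3]]] := Hval r_irl.
  have h1 := Hv2 _ Hrl_pol.
  have h2 : v <= rl_obj r_irl pi_rl.
    apply: Rnot_lt_le => h.
    have [pii [Hp Hlt]] := Hv3 (v - rl_obj r_irl pi_rl) ltac:(lra).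
    have := Hrl_max _ Hp; lra.
  rewrite Hv1; f_equal; lra.
have [pst Hpst] : exists p, psi r_irl = Fin p.
  case Hpr: (psi r_irl) => [p| |]; first by exists p.
  - exfalso; have [r0 Hr0] := proj2 Hprop.
    case Hr0' : (psi r0) Hr0 => [c| |] // _; last by have := proj1 Hprop r0.
    have [v0 [Hv0 _]] := Hval r0.
    have := Hirl r0; rewrite /irl_obj Hr0' Hv0 Hpr /=; by [].
  - exfalso; exact: (proj1 Hprop r_irl Hpr).
have HB : forall r p, psi r = Fin p ->
    pst - p + (Eexp (piE i) r - Eexp (piE i) r_irl) - (Eexp pi_rl r - Eexp pi_rl r_irl) <= 0.
  move=> r p Hp.
  apply: (danskin (r := r) (r0 := r_irl) (lam := lam) HP H0 Hg HE Hrl_pol Hrl_max Hrl_u).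
  move=> t d [Ht0 Ht1] Hd.
  have Hcv := Hconv r r_irl p pst t (conj (Rlt_le _ _ Ht0) Ht1)
    ltac:(by rewrite Hp /=; lra) ltac:(by rewrite Hpst /=; lra).
  have [pt [Hpt Hpt2]] : exists pt, psi (fun z => t * r z + (1 - t) * r_irl z) = Fin pt /\
      pt <= t * p + (1 - t) * pst.
    move: Hcv; case Hq: (psi (fun z => t * r z + (1 - t) * r_irl z)) => [c| |] //= h.
      by exists c.
    exfalso; exact: (proj1 Hprop _ Hq).
  have [vt [Hvt1 [Hvt2 Hvt3]]] := Hval (fun z => t * r z + (1 - t) * r_irl z).
  have [pii [Hpp Hlt]] := Hvt3 d Hd.
  exists pii; split => //.
  have Hi := Hirl (fun z => t * r z + (1 - t) * r_irl z).
  rewrite /irl_obj Hpt Hvt1 Hpst Hvstar /= in Hi.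
  have L1 : Eexp pii (fun z => t * r z + (1 - t) * r_irl z) = t * Eexp pii r + (1 - t) * Eexp pii r_irl.
    by rewrite !FE // inner_lin.
  have L2 : Eexp (piE i) (fun z => t * r z + (1 - t) * r_irl z) =
      t * Eexp (piE i) r + (1 - t) * Eexp (piE i) r_irl.
    by rewrite !FE // inner_lin.
  have Hm := Hrl_max _ Hpp.
  move: Hi Hlt Hm; rewrite /rl_obj L1 L2 => Hi Hlt Hm.
  have goal : t * (pst - p + (Eexp (piE i) r - Eexp (piE i) r_irl) - (Eexp pi_rl r - Eexp pi_rl r_irl)
     + (Eexp pi_rl r - Eexp pi_rl r_irl) - (Eexp pii r - Eexp pii r_irl))
     + ((lam * Hent pi_rl + Eexp pi_rl r_irl) - (lam * Hent pii + Eexp pii r_irl)) < d.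
    nra.
  exact: goal.
have Hinner : forall (pii : St -> A i -> R) r, is_policy pii ->
    inner (fun sa => occ P rho0 gamma (jpol pii piE) sa - occ P rho0 gamma (jpol (piE i) piE) sa) r
    = Eexp pii r - Eexp (piE i) r.
  move=> pii r Hp; rewrite inner_minus -FE // -FE //.
pose cst := - (Eexp pi_rl r_irl - Eexp (piE i) r_irl) - pst.
have Hconj : forall (pii : St -> A i -> R), is_policy pii ->
    Rbar_le (Fin (- (Eexp pii r_irl - Eexp (piE i) r_irl) - pst))
      (conj_fun psi (fun sa => occ P rho0 gamma (jpol pii piE) sa - occ P rho0 gamma (jpol (piE i) piE) sa)).
  move=> pii Hp; have [Hub _] := Rbar_sup_lub (fun v => exists r, v = Rbar_plus
     (Fin (- inner (fun sa => occ P rho0 gamma (jpol pii piE) sa - occ P rho0 gamma (jpol (piE i) piE) sa) r))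
     (Rbar_opp (psi r))).
  apply: Hub; exists r_irl; rewrite Hpst Hinner //=.
have Hconjst : conj_fun psi (fun sa => occ P rho0 gamma (jpol pi_rl piE) sa - occ P rho0 gamma (jpol (piE i) piE) sa)
   = Fin cst.
  apply: Rbar_le_antisym_fin; last exact: Hconj.
  have [_ Hl] := Rbar_sup_lub (fun v => exists r, v = Rbar_plus
     (Fin (- inner (fun sa => occ P rho0 gamma (jpol pi_rl piE) sa - occ P rho0 gamma (jpol (piE i) piE) sa) r))
     (Rbar_opp (psi r))).
  apply: Hl => v [r ->].
  case Hr: (psi r) => [p| |] /=; last by have := proj1 Hprop r.
    rewrite Hinner //; have := HB r p Hr; rewrite /cst; lra.
  by case: (Fin _).
apply: (Hpr_u pi_rl Hrl_pol).
move=> pii' Hp'.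
have Hc := Hconj pii' Hp'.
rewrite /primal_obj Hconjst /=.
move: Hc; case: (conj_fun psi _) => [c| |] //= hc.
have := Hrl_max _ Hp'; rewrite /rl_obj /cst => hm.
nra.
Qed.
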